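(* Let $A$ be a finite nonempty set of positive real numbers. Then $$\left|\frac{A+A}{A+A}\right|\geq 2|A|^2-1.$$
   Context: For a finite set $A\subset\mathbb{R}$ of positive reals, $\frac{A+A}{A+A}:=\left\{\frac{a+b}{c+d}: a,b,c,d\in A\right\}$. $|X|$ denotes the cardinality of a finite set $X$. *)

(* Defs.v *)
From Stdlib Require Import Reals List.
Import ListNotations.
Open Scope R_scope.

Definition sumlist (A : list R) : list R :=
  flat_map (fun a => map (fun b => a + b) A) A.

Definition ratiolist (A : list R) : list R :=
  flat_map (fun s => map (fun t => s / t) (sumlist A)) (sumlist A).

Definition ratio_card (A : list R) : nat :=
  length (nodup Req_EM_T (ratiolist A)).

(* Main.v *)
Require Import Defs.
From Stdlib Require Import Reals List Lia Lra.
Import ListNotations.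
Open Scope R_scope.

Definition slope (p : R*R) := fst p / snd p.
Definition rat2 (p q : R*R) := (fst p + fst q) / (snd p + snd q).
Definition inR (P : list (R*R)) r := exists p q, In p P /\ In q P /\ r = rat2 p q.
Definition posP (P : list (R*R)) := forall p, In p P -> 0 < fst p /\ 0 < snd p.
Definition isslope s p := if Req_EM_T (slope p) s then true else false.
Definition cnt s P := length (filter (isslope s) P).

Lemma isslope_iff s p : isslope s p = true <-> slope p = s.
Proof. unfold isslope; destruct Req_EM_T; split; intros; congruence. Qed.

Lemma lt_frac a n d : 0 < d -> a * d < n -> a < n / d.
Proof. intros Hd H. apply (Rmult_lt_reg_r d); [lra|].
replace (n / d * d) with n by (field; lra). lra. Qed.

Lemma frac_lt b n d : 0 < d -> n < b * d -> n / d < b.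
Proof. intros Hd H. apply (Rmult_lt_reg_r d); [lra|].
replace (n / d * d) with n by (field; lra). lra. Qed.

Lemma frac_frac_lt n1 d1 n2 d2 : 0 < d1 -> 0 < d2 -> n1 * d2 < n2 * d1 -> n1 / d1 < n2 / d2.
Proof. intros H1 H2 H. apply (Rmult_lt_reg_r (d1*d2)); [nra|].
replace (n1 / d1 * (d1*d2)) with (n1*d2) by (field; lra).
replace (n2 / d2 * (d1*d2)) with (n2*d1) by (field; lra). lra. Qed.

Lemma frac_frac_le n1 d1 n2 d2 : 0 < d1 -> 0 < d2 -> n1 * d2 <= n2 * d1 -> n1 / d1 <= n2 / d2.
Proof. intros H1 H2 H. apply (Rmult_le_reg_r (d1*d2)); [nra|].
replace (n1 / d1 * (d1*d2)) with (n1*d2) by (field; lra).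
replace (n2 / d2 * (d1*d2)) with (n2*d1) by (field; lra). lra. Qed.

Lemma med a b y w : a < b -> 0 < y -> 0 < w ->
  a < (a*y + b*w)/(y+w) < b.
Proof. intros. split. apply lt_frac; nra. apply frac_lt; nra. Qed.

Lemma M1 a b y y' w : a < b -> 0 < y -> y < y' -> 0 < w ->
  (a*y' + b*w)/(y'+w) < (a*y + b*w)/(y+w).
Proof. intros. apply frac_frac_lt; try lra.
assert ((a*y+b*w)*(y'+w) - (a*y'+b*w)*(y+w) = w*((y'-y)*(b-a))) by ring.
assert (0 < w*((y'-y)*(b-a))) by (apply Rmult_lt_0_compat; nra). lra. Qed.

Lemma M2 a b y w w' : a < b -> 0 < y -> 0 < w -> w <= w' ->
  (a*y + b*w)/(y+w) <= (a*y + b*w')/(y+w').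
Proof. intros. apply frac_frac_le; try lra.
assert ((a*y+b*w')*(y+w) - (a*y+b*w)*(y+w') = y*((w'-w)*(b-a))) by ring.
assert (0 <= y*((w'-w)*(b-a))) by (apply Rmult_le_pos; nra). lra. Qed.

Lemma M2s a b y w w' : a < b -> 0 < y -> 0 < w -> w < w' ->
  (a*y + b*w)/(y+w) < (a*y + b*w')/(y+w').
Proof. intros. apply frac_frac_lt; try lra.
assert ((a*y+b*w')*(y+w) - (a*y+b*w)*(y+w') = y*((w'-w)*(b-a))) by ring.
assert (0 < y*((w'-w)*(b-a))) by (apply Rmult_lt_0_compat; nra). lra. Qed.

Lemma fst_eq p a : slope p = a -> 0 < snd p -> fst p = a * snd p.
Proof. unfold slope; intros H H0. rewrite <- H. field. lra. Qed.

Lemma rat2_eq u q a b : slope u = a -> slope q = b -> 0 < snd u -> 0 < snd q ->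
  rat2 u q = (a * snd u + b * snd q) / (snd u + snd q).
Proof. intros. unfold rat2. rewrite (fst_eq u a), (fst_eq q b); auto. Qed.

Lemma same_line p p' a : slope p = a -> slope p' = a -> snd p = snd p' -> 0 < snd p -> p = p'.
Proof. intros H1 H2 H3 H4. pose proof (fst_eq p a H1 H4).
pose proof (fst_eq p' a H2 ltac:(lra)). destruct p, p'; simpl in *; subst; f_equal; congruence. Qed.

Lemma exists_max {T} (f : T -> R) l : l <> [] -> exists x, In x l /\ forall y, In y l -> f y <= f x.
Proof. induction l as [|a t IH]; intros H; [congruence|].
destruct t as [|b t'].
- exists a; split; [left; auto|]. intros y [->|[]]; lra.
- destruct IH as [x [Hx Hm]]; [discriminate|].
  destruct (Rle_dec (f a) (f x)).
  + exists x; split; [right; auto|]. intros y [->|Hy]; auto.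
  + exists a; split; [left; auto|]. intros y [->|Hy]; [lra|]. specialize (Hm y Hy); lra.
Qed.

Lemma exists_min {T} (f : T -> R) l : l <> [] -> exists x, In x l /\ forall y, In y l -> f x <= f y.
Proof. intros H. destruct (exists_max (fun x => - f x) l H) as [x [Hx Hm]].
exists x; split; auto. intros y Hy; specialize (Hm y Hy); lra. Qed.

Lemma pos_sub P P' : posP P -> incl P' P -> posP P'.
Proof. unfold posP, incl; intros; auto. Qed.

Lemma pos_snd P p : posP P -> In p P -> 0 < snd p.
Proof. intros H Hp; apply H; auto. Qed.

Ltac ps := try (match goal with H : posP ?P |- 0 < snd ?p => solve [apply (pos_snd P p H); auto] end).

Lemma stair : forall n U Q, (length U + length Q <= n)%nat -> NoDup U -> NoDup Q -> posP U -> posP Q ->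
  U <> [] -> Q <> [] -> forall a b, a < b -> (forall u, In u U -> slope u = a) ->
  (forall q, In q Q -> slope q = b) ->
  exists E, NoDup E /\ length E = (length U + length Q - 1)%nat /\
   forall r, In r E -> a < r < b /\ exists u q, In u U /\ In q Q /\ r = rat2 u q.
Proof.
induction n as [|n IH]; intros U Q Hn HU HQ PU PQ NU NQ a b Hab SU SQ.
{ exfalso; destruct U as [|u0 U0]; [apply NU; reflexivity|simpl in Hn; lia]. }
destruct (exists_max snd U NU) as [um [Hum Hummax]].
destruct (exists_min snd Q NQ) as [qm [Hqm Hqmmin]].
assert (base : forall u q, In u U -> In q Q -> a < rat2 u q < b).
{ intros u q Hu Hq. rewrite (rat2_eq u q a b); auto; ps; ps.
  apply med; auto; ps; ps. }
destruct (Compare_dec.le_lt_dec 2 (length U)) as [HU2|HU2].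
- destruct (in_split _ _ Hum) as [U1 [U2 HUe]].
  assert (HUd := HU). rewrite HUe in HUd. apply NoDup_remove in HUd as [HU' Hnin].
  assert (incl (U1++U2) U) as Hinc.
  { intros x Hx. rewrite HUe. apply in_app_or in Hx as [|]; apply in_or_app; [left|right;right]; auto. }
  assert (Hlen : length U = S (length (U1++U2))) by (rewrite HUe, !length_app; simpl; lia).
  destruct (IH (U1++U2) Q) with (a:=a) (b:=b) as [E [HE1 [HE2 HE3]]]; auto.
  + lia.
  + apply (pos_sub U); auto.
  + intro Hc; rewrite Hc in Hlen; simpl in Hlen; lia.
  + exists (rat2 um qm :: E). split; [|split].
    * constructor; auto. intro Hin. destruct (HE3 _ Hin) as [_ [u [q [Hu [Hq Hr]]]]].
      assert (Hlt : rat2 um qm < rat2 u q).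
      { assert (Hu' : In u U) by auto.
        assert (snd u <> snd um).
        { intro Heq. assert (u = um) by (apply (same_line u um a); auto; ps).
          subst. auto. }
        assert (snd u < snd um) by (specialize (Hummax u Hu'); lra).
        rewrite (rat2_eq um qm a b), (rat2_eq u q a b); auto; ps; ps.
        apply Rlt_le_trans with ((a * snd u + b * snd qm) / (snd u + snd qm)).
        - apply M1; auto; ps; ps.
        - apply M2; auto; ps; ps. }
      lra.
    * simpl. rewrite HE2. lia.
    * intros r [<-|Hr].
      { split; [apply base; auto|]. exists um, qm; auto. }
      { destruct (HE3 r Hr) as [H1 [u [q [Hu [Hq Hrr]]]]]. split; auto. exists u, q; auto. }
- destruct (Compare_dec.le_lt_dec 2 (length Q)) as [HQ2|HQ2].
  + destruct (in_split _ _ Hqm) as [Q1 [Q2 HQe]].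
    assert (HQd := HQ). rewrite HQe in HQd. apply NoDup_remove in HQd as [HQ' Hnin].
    assert (incl (Q1++Q2) Q) as Hinc.
    { intros x Hx. rewrite HQe. apply in_app_or in Hx as [|]; apply in_or_app; [left|right;right]; auto. }
    assert (Hlen : length Q = S (length (Q1++Q2))) by (rewrite HQe, !length_app; simpl; lia).
    destruct (IH U (Q1++Q2)) with (a:=a) (b:=b) as [E [HE1 [HE2 HE3]]]; auto.
    * lia.
    * apply (pos_sub Q); auto.
    * intro Hc; rewrite Hc in Hlen; simpl in Hlen; lia.
    * exists (rat2 um qm :: E). split; [|split].
      -- constructor; auto. intro Hin. destruct (HE3 _ Hin) as [_ [u [q [Hu [Hq Hr]]]]].
         assert (u = um).
         { destruct U as [|u0 [|u1 U']]; [congruence| |simpl in HU2; lia].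
           destruct Hu as [<-|[]]; destruct Hum as [<-|[]]; auto. }
         subst u.
         assert (Hlt : rat2 um qm < rat2 um q).
         { assert (Hq' : In q Q) by auto.
           assert (snd q <> snd qm).
           { intro Heq. assert (q = qm) by (apply (same_line q qm b); auto; ps).
             subst. auto. }
           assert (snd qm < snd q) by (specialize (Hqmmin q Hq'); lra).
           rewrite (rat2_eq um qm a b), (rat2_eq um q a b); auto; ps; ps.
           apply M2s; auto; ps; ps. }
         lra.
      -- simpl. rewrite HE2. lia.
      -- intros r [<-|Hr].
         { split; [apply base; auto|]. exists um, qm; auto. }
         { destruct (HE3 r Hr) as [H1 [u [q [Hu [Hq Hrr]]]]]. split; auto. exists u, q; auto. }
  + exists [rat2 um qm]. split; [|split].
    * constructor; [intros []|constructor].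
    * destruct U as [|u0 U']; [congruence|]; destruct Q as [|q0 Q']; [congruence|].
      simpl in *. lia.
    * intros r [<-|[]]. split; [apply base; auto|]. exists um, qm; auto.
Qed.

Lemma filter_filter_eq {T} (f g : T -> bool) l :
  (forall x, f x = true -> g x = true) -> filter f (filter g l) = filter f l.
Proof. intros H; induction l as [|a t IH]; simpl; auto.
destruct (g a) eqn:Eg; simpl; destruct (f a) eqn:Ef; simpl; try rewrite IH; auto.
rewrite (H a Ef) in Eg; discriminate. Qed.

Lemma main : forall n P, (length P <= n)%nat -> NoDup P -> posP P -> forall smin smax,
  (exists p, In p P /\ slope p = smin) -> (forall p, In p P -> smin <= slope p) ->
  (exists p, In p P /\ slope p = smax) -> (forall p, In p P -> slope p <= smax) ->
  exists L, NoDup L /\ (forall r, In r L -> inR P r /\ r <= smax) /\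
   (2 * length P + 1 <= length L + cnt smax P + cnt smin P)%nat.
Proof.
induction n as [|n IH]; intros P Hn HP PP smin smax [pmin [Hpmin Hsmin]] Hmin [pmax [Hpmax Hsmax]] Hmax.
{ destruct P; [destruct Hpmin|simpl in Hn; lia]. }
set (P' := filter (fun p => negb (isslope smax p)) P).
set (Q := filter (isslope smax) P).
assert (Hlen : (length Q + length P' = length P)%nat) by apply filter_length.
assert (HQin : forall q, In q Q <-> In q P /\ slope q = smax).
{ intros q; unfold Q; rewrite filter_In, isslope_iff; tauto. }
assert (HP'in : forall q, In q P' <-> In q P /\ slope q <> smax).
{ intros q; unfold P'; rewrite filter_In. unfold isslope; destruct Req_EM_T; simpl; intuition congruence. }
assert (HQne : In pmax Q) by (apply HQin; auto).
destruct P' as [|p0 P0] eqn:EP'.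
-
  assert (Hall : forall p, In p P -> slope p = smax).
  { intros p Hp. destruct (Req_EM_T (slope p) smax); auto. exfalso. apply (proj2 (HP'in p)); auto. }
  assert (Hss : smin = smax) by (rewrite <- Hsmin; apply Hall; auto). rewrite Hss.
  assert (cnt smax P = length P) by (unfold cnt; fold Q; simpl in Hlen; lia).
  exists [smax]. split; [constructor; [intros []|constructor]|split].
  + intros r [<-|[]]. split; [|lra]. exists pmax, pmax. split; auto; split; auto.
    unfold rat2. rewrite <- Hsmax. unfold slope.
    assert (0 < snd pmax) by (apply PP; auto). field; lra.
  + change (length [smax]) with 1%nat. lia.
- set (P1 := p0 :: P0) in *.
  assert (HP1ne : P1 <> []) by discriminate.
  destruct (exists_max slope P1 HP1ne) as [pm' [Hpm' Hm']].
  set (smax' := slope pm').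
  assert (Hlt' : smax' < smax).
  { apply HP'in in Hpm' as [Hi Hne]. specialize (Hmax _ Hi). unfold smax'; lra. }
  assert (Hsub : incl P1 P) by (intros x Hx; apply HP'in in Hx; tauto).
  assert (HminP1 : In pmin P1).
  { apply HP'in. split; auto. specialize (Hmin pm' (Hsub _ Hpm')). fold smax' in Hmin. lra. }
  assert (HNP1 : NoDup P1) by (rewrite <- EP'; apply NoDup_filter; auto).
  destruct (IH P1) with (smin := smin) (smax := smax') as [L' [HL1 [HL2 HL3]]]; auto.
  + assert (length Q <> 0%nat) by (intro Hc; apply length_zero_iff_nil in Hc; rewrite Hc in HQne; destruct HQne).
    revert Hn Hlen H; generalize (length Q) (length P1) (length P); intros; lia.
  + apply (pos_sub P); auto.
  + exists pmin; auto.
  + exists pm'; auto.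
  + set (U := filter (isslope smax') P1).
    assert (HUin : forall u, In u U <-> In u P1 /\ slope u = smax').
    { intros u; unfold U; rewrite filter_In, isslope_iff; tauto. }
    destruct (stair (length U + length Q) U Q) with (a := smax') (b := smax) as [E [HE1 [HE2 HE3]]]; auto.
    * apply NoDup_filter; auto.
    * unfold Q; apply NoDup_filter; auto.
    * apply (pos_sub P); auto. intros x Hx; apply HUin in Hx; apply Hsub; tauto.
    * apply (pos_sub P); auto. intros x Hx; apply HQin in Hx; tauto.
    * intro Hc. assert (In pm' U) by (apply HUin; auto). rewrite Hc in H; auto.
    * intro Hc. rewrite Hc in HQne; auto.
    * intros u Hu; apply HUin in Hu; tauto.
    * intros u Hu; apply HQin in Hu; tauto.
    * exists (L' ++ E ++ [smax]). split; [|split].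
      -- apply NoDup_app; auto.
         ++ apply NoDup_app; auto. constructor; [intros []|constructor].
            intros r Hr [<-|[]]. apply HE3 in Hr; lra.
         ++ intros r Hr Hr2. apply HL2 in Hr as [_ Hr].
            apply in_app_or in Hr2 as [Hr2|[<-|[]]]; [apply HE3 in Hr2|]; lra.
      -- intros r Hr. apply in_app_or in Hr as [Hr|Hr]; [|apply in_app_or in Hr as [Hr|[<-|[]]]].
         ++ apply HL2 in Hr as [[p [q [Hp [Hq Hrr]]]] Hr]. split; [|lra].
            exists p, q; auto.
         ++ apply HE3 in Hr as [Hr [u [q [Hu [Hq Hrr]]]]]. split; [|lra].
            exists u, q. apply HUin in Hu. apply HQin in Hq. intuition.
         ++ split; [|lra]. exists pmax, pmax. split; auto; split; auto.
            unfold rat2. rewrite <- Hsmax. unfold slope.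
            assert (0 < snd pmax) by (apply PP; auto). field; lra.
      -- rewrite !length_app. simpl. rewrite HE2.
         assert (cnt smin P1 = cnt smin P).
         { unfold cnt. rewrite <- EP'. unfold P'. apply (f_equal (@length _)).
           apply filter_filter_eq. intros x Hx. apply isslope_iff in Hx.
           unfold isslope; destruct Req_EM_T; auto. exfalso.
           specialize (Hmin pm' (Hsub _ Hpm')). fold smax' in Hmin. lra. }
         assert (cnt smax P = length Q) by reflexivity.
         assert (cnt smax' P1 = length U) by reflexivity.
         assert (length P1 = length P0 + 1)%nat by (simpl; lia).
         assert (length U > 0)%nat.
         { assert (HU' : In pm' U) by (apply HUin; auto).
           assert (length U <> 0%nat) by (intro Hc; apply length_zero_iff_nil in Hc; rewrite Hc in HU'; destruct HU'). lia. }
         assert (length Q <> 0%nat) by (intro Hc; apply length_zero_iff_nil in Hc; rewrite Hc in HQne; destruct HQne).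
         lia.
Qed.

Lemma NoDup_prod {T} (A B : list T) : NoDup A -> NoDup B -> NoDup (list_prod A B).
Proof. intros HA HB; induction HA as [|a t Ha Ht IH]; simpl; [constructor|].
apply NoDup_app; auto.
- apply NoDup_map_NoDup_ForallPairs; auto. intros x y _ _ H; congruence.
- intros p Hp1 Hp2. apply in_map_iff in Hp1 as [b [<- _]]. apply in_prod_iff in Hp2; tauto. Qed.

Lemma len_le1 {T} (l : list T) : NoDup l -> (forall x y, In x l -> In y l -> x = y) -> (length l <= 1)%nat.
Proof. destruct l as [|x [|y l]]; simpl; intros H1 H2; try lia.
exfalso. inversion H1; subst. apply H3. left. apply H2; simpl; auto. Qed.

Lemma frac_le_inv x y u v : 0 < y -> 0 < v -> x / y <= u / v -> x * v <= u * y.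
Proof. intros Hy Hv H. apply (Rmult_le_compat_r (y*v)) in H; [|nra].
replace (x / y * (y*v)) with (x*v) in H by (field; lra).
replace (u / v * (y*v)) with (u*y) in H by (field; lra). lra. Qed.

Lemma in_ratio A a b c d : In a A -> In b A -> In c A -> In d A -> In ((a+b)/(c+d)) (ratiolist A).
Proof. intros. unfold ratiolist. apply in_flat_map. exists (a+b). split.
- unfold sumlist. apply in_flat_map. exists a; split; auto. apply in_map; auto.
- apply in_map_iff. exists (c+d); split; auto.
  unfold sumlist. apply in_flat_map. exists c; split; auto. apply in_map; auto. Qed.

Theorem theorem1 (A : list R) :
  NoDup A -> A <> nil -> (forall a, In a A -> 0 < a) ->
  (2 * length A * length A - 1 <= ratio_card A)%nat.
Proof.
intros HA HAne Hpos.
set (P := list_prod A A).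
assert (HPpos : posP P).
{ intros [x y] Hp. apply in_prod_iff in Hp as [Hx Hy]. simpl; auto. }
assert (HPne : P <> []).
{ destruct A as [|a t]; [congruence|]. unfold P; simpl; discriminate. }
destruct (exists_min slope P HPne) as [pmin [Hpmin Hmin]].
destruct (exists_max slope P HPne) as [pmax [Hpmax Hmax]].
destruct (main (length P) P (le_n _) (NoDup_prod A A HA HA) HPpos (slope pmin) (slope pmax))
  as [L [HL1 [HL2 HL3]]]; eauto.
assert (Hlp : length P = (length A * length A)%nat) by apply length_prod.
assert (C1 : (cnt (slope pmax) P <= 1)%nat).
{ apply len_le1; [apply NoDup_filter, NoDup_prod; auto|].
  intros [a c] [b d] H1 H2. apply filter_In in H1 as [H1 E1]. apply filter_In in H2 as [H2 E2].
  apply isslope_iff in E1. apply isslope_iff in E2.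
  apply in_prod_iff in H1 as [Ha Hc]. apply in_prod_iff in H2 as [Hb Hd].
  pose proof (Hpos a Ha). pose proof (Hpos b Hb). pose proof (Hpos c Hc). pose proof (Hpos d Hd).
  assert (Hbc := Hmax (b,c) ltac:(apply in_prod_iff; auto)).
  assert (Had := Hmax (a,d) ltac:(apply in_prod_iff; auto)).
  unfold slope in *; simpl in *. rewrite <- E1 in Hbc. rewrite <- E2 in Had.
  apply frac_le_inv in Hbc; auto. apply frac_le_inv in Had; auto.
  assert (a = b) by nra. subst b.
  rewrite <- E2 in E1.
  assert (a*d <= a*c) by (apply frac_le_inv; auto; lra).
  assert (a*c <= a*d) by (apply frac_le_inv; auto; lra).
  assert (c = d) by nra. subst; auto. }
assert (C2 : (cnt (slope pmin) P <= 1)%nat).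
{ apply len_le1; [apply NoDup_filter, NoDup_prod; auto|].
  intros [a c] [b d] H1 H2. apply filter_In in H1 as [H1 E1]. apply filter_In in H2 as [H2 E2].
  apply isslope_iff in E1. apply isslope_iff in E2.
  apply in_prod_iff in H1 as [Ha Hc]. apply in_prod_iff in H2 as [Hb Hd].
  pose proof (Hpos a Ha). pose proof (Hpos b Hb). pose proof (Hpos c Hc). pose proof (Hpos d Hd).
  assert (Hbc := Hmin (b,c) ltac:(apply in_prod_iff; auto)).
  assert (Had := Hmin (a,d) ltac:(apply in_prod_iff; auto)).
  unfold slope in *; simpl in *. rewrite <- E1 in Hbc. rewrite <- E2 in Had.
  apply frac_le_inv in Hbc; auto. apply frac_le_inv in Had; auto.
  assert (a = b) by nra. subst b.
  rewrite <- E2 in E1.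
  assert (a*d <= a*c) by (apply frac_le_inv; auto; lra).
  assert (a*c <= a*d) by (apply frac_le_inv; auto; lra).
  assert (c = d) by nra. subst; auto. }
assert (HLr : (length L <= ratio_card A)%nat).
{ unfold ratio_card. apply NoDup_incl_length; auto. intros r Hr.
  apply nodup_In. apply HL2 in Hr as [[p [q [Hp [Hq ->]]]] _].
  destruct p as [a c], q as [b d]. apply in_prod_iff in Hp as [Ha Hc].
  apply in_prod_iff in Hq as [Hb Hd]. unfold rat2; simpl. apply in_ratio; auto. }
lia.
Qed.
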